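(* Let $R$ be a domain satisfying the ascending chain condition for principal ideals, and let $a\in R$ be a non-zero element with $a\notin R^{\ast}$. Then: (i) there exist $b\in R$ and $c\in\operatorname{Sqf} R$ such that $a=b^2c$; (ii) there exist $n\geqslant 0$ and $s_0,s_1,\dots,s_n\in\operatorname{Sqf} R$ such that $a=s_n^{2^n}s_{n-1}^{2^{n-1}}\cdots s_1^2s_0$; (iii) there exist $n\geqslant 1$, $s_1,\dots,s_n\in(\operatorname{Sqf} R)\setminus R^{\ast}$, integers $0\leqslant k_1<k_2<\dots<k_n$, and $c\in R^{\ast}$ such that $a=c\,s_n^{2^{k_n}}s_{n-1}^{2^{k_{n-1}}}\cdots s_1^{2^{k_1}}$.
   Context: A domain is a commutative ring with identity without zero divisors. $R^{\ast}$ denotes the set of invertible elements of $R$. An element $a\in R$ is square-free if it cannot be written as $a=b^2c$ with $b\in R\setminus R^{\ast}$ and $c\in R$; $\operatorname{Sqf} R$ denotes the set of square-free elements of $R$. *)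

(* Defs.v *)
From mathcomp Require Import all_boot all_algebra.
Set Implicit Arguments. Unset Strict Implicit. Unset Printing Implicit Defensive.
Import GRing.Theory.
Local Open Scope ring_scope.

Definition rdvd (R : comRingType) (x y : R) : Prop := exists c : R, y = x * c.

Definition ACCP (R : comRingType) : Prop :=
  forall f : nat -> R, (forall n, rdvd (f n.+1) (f n)) ->
    exists N, forall n, (N <= n)%N -> rdvd (f n) (f N) /\ rdvd (f N) (f n).

Definition sqf (R : comUnitRingType) (a : R) : Prop :=
  ~ exists b c : R, b \isn't a GRing.unit /\ a = b ^+ 2 * c.

(* Main.v *)
Require Import Defs.
From mathcomp Require Import all_boot all_algebra.
From Stdlib Require Import Classical ClassicalEpsilon.
Import GRing.Theory.
Local Open Scope ring_scope.

Lemma acc_ind (R : idomainType) (hacc : ACCP R) (P : R -> Prop) :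
  (forall x, (forall y, rdvd y x -> ~ rdvd x y -> P y) -> P x) -> forall x, P x.
Proof.
move=> H x; apply: NNPP => nPx.
have step : forall z, exists y, ~ P z -> ~ P y /\ rdvd y z /\ ~ rdvd z y.
  move=> z; case: (classic (P z)) => [Pz|nPz]; first by exists z.
  have : ~ (forall y, rdvd y z -> ~ rdvd z y -> P y) by move=> h; apply: nPz; apply: H.
  move/not_all_ex_not => [y hy]; exists y => _.
  split; last split.
  - by move=> Py; apply: hy.
  - by apply: NNPP => h; apply: hy.
  - by move=> h; apply: hy.
pose g z := proj1_sig (constructive_indefinite_description _ (step z)).
have gP z : ~ P z -> ~ P (g z) /\ rdvd (g z) z /\ ~ rdvd z (g z).
  by rewrite /g; case: constructive_indefinite_description.
pose f n := iter n g x.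
have fP : forall n, ~ P (f n) by elim=> [|n IH] //=; case: (gP _ IH).
have [N HN] := hacc f (fun n => proj1 (proj2 (gP _ (fP n)))).
have [_ h] := HN N.+1 (leqnSn N).
by case: (gP _ (fP N)) => _ [_]; apply.
Qed.

Lemma unitl {R : comUnitRingType} {x y : R} : (x * y) \is a GRing.unit -> x \is a GRing.unit.
Proof. by rewrite unitrM => /andP[]. Qed.

Lemma unit_sqf (R : comUnitRingType) (u : R) : u \is a GRing.unit -> sqf u.
Proof.
move=> hu [b [c [hb e]]]; move/negP: hb; apply; apply: (@unitl _ _ (b * c)).
by rewrite mulrA -expr2 -e.
Qed.

Lemma cancel1 {R : idomainType} {x w : R} : x != 0 -> x = x * w -> w = 1.
Proof. by move=> hx e; apply: (mulfI hx); rewrite mulr1 -e. Qed.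

Lemma part1 (R : idomainType) (hacc : ACCP R) (x : R) :
  x != 0 -> exists b c : R, sqf c /\ x = b ^+ 2 * c.
Proof.
elim/(@acc_ind _ hacc): x => x IH hx.
case: (classic (sqf x)) => [sx|nsx]; first by exists 1, x; rewrite expr1n mul1r.
have [b0 [c0 [hb0 e0]]] := NNPP _ nsx.
have c0n : c0 != 0 by apply: contraNneq hx => ec; rewrite e0 ec mulr0.
have d1 : rdvd c0 x by exists (b0 ^+ 2); rewrite e0 mulrC.
have d2 : ~ rdvd x c0.
  move=> [y ey]; move/negP: hb0; apply; apply: (@unitl _ _ (b0 * y)).
  have : b0 ^+ 2 * y = 1 by apply: (cancel1 hx); rewrite {1}e0 ey; rewrite mulrCA mulrA.
  by rewrite expr2 -mulrA => ->; rewrite unitr1.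
have [b1 [c1 [s1 e1]]] := IH c0 d1 d2 c0n.
by exists (b0 * b1), c1; split => //; rewrite e0 e1 exprMn mulrA.
Qed.

Lemma strictb {R : idomainType} {x b c : R} : x != 0 -> x \isn't a GRing.unit ->
  x = b ^+ 2 * c -> rdvd b x /\ ~ rdvd x b.
Proof.
move=> x0 hx e; split; first by exists (b * c); rewrite e expr2 mulrA.
move=> [y ey].
move/negP: hx; apply.
apply: (@unitl _ _ (y ^+ 2 * c)).
have -> : x * (y ^+ 2 * c) = 1.
  by apply: (cancel1 x0); rewrite {1}e ey exprMn expr2 -!mulrA.
exact: unitr1.
Qed.

Lemma pow2S (R : comPzRingType) (x : R) (i : nat) : x ^+ (2 ^ i.+1) = (x ^+ (2 ^ i)) ^+ 2.
Proof. by rewrite expnS mulnC exprM. Qed.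

Lemma part2 (R : idomainType) (hacc : ACCP R) (x : R) : x != 0 ->
  exists (n : nat) (s : nat -> R),
     (forall i, (i <= n)%N -> sqf (s i)) /\
     x = \prod_(i < n.+1) s i ^+ (2 ^ i).
Proof.
elim/(@acc_ind _ hacc): x => x IH hx.
case ux: (x \is a GRing.unit).
  exists 0%N, (fun _ => x); split; first by move=> i _; apply: unit_sqf.
  by rewrite big_ord1 expn0 expr1.
have [b [c [sc e]]] := @part1 _ hacc _ hx.
have [d1 d2] := strictb hx (negbT ux) e.
have b0 : b != 0 by apply: contraNneq hx => eb; rewrite e eb expr2 !mul0r.
have [n [s [ss es]]] := IH b d1 d2 b0.
exists n.+1, (fun i => if i is j.+1 then s j else c); split.
  by case=> // i; apply: ss.
rewrite big_ord_recl /= expn0 expr1 e es mulrC; congr (_ * _).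
rewrite -prodrXl; apply: eq_bigr => i _ /=.
by rewrite /bump /= add1n pow2S.
Qed.

Lemma part3 (R : idomainType) (hacc : ACCP R) (x : R) : x != 0 ->
  (exists (n : nat) (s : nat -> R) (k : nat -> nat) (c : R),
     (forall i, (1 <= i <= n)%N -> sqf (s i) /\ s i \isn't a GRing.unit) /\
     (forall i, (1 <= i < n)%N -> (k i < k i.+1)%N) /\
     c \is a GRing.unit /\
     x = c * \prod_(1 <= i < n.+1) s i ^+ (2 ^ k i)).
Proof.
elim/(@acc_ind _ hacc): x => x IH hx.
case ux: (x \is a GRing.unit).
  exists 0%N, (fun _ => x), (fun _ => 0%N), x; split; first by case=> [|[]].
  split; first by case=> [|[]].
  by split => //; rewrite big_geq // mulr1.
have [b [c0 [sc e]]] := @part1 _ hacc _ hx.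
have [d1 d2] := strictb hx (negbT ux) e.
have b0 : b != 0 by apply: contraNneq hx => eb; rewrite e eb expr2 !mul0r.
have [n [s [k [u [ss [sk [uu es]]]]]]] := IH b d1 d2 b0.
have eb : x = u ^+ 2 * c0 * \prod_(1 <= i < n.+1) s i ^+ (2 ^ (k i).+1).
  rewrite e es exprMn -prodrXl; under [in RHS]eq_bigr => i _ do rewrite pow2S.
  by rewrite mulrAC.
case uc: (c0 \is a GRing.unit).
  exists n, s, (fun i => (k i).+1), (u ^+ 2 * c0); split => //; split.
    by move=> i hi; rewrite ltnS; apply: sk.
  by split => //; rewrite unitrM uc unitrX.
exists n.+1, (fun i => if i == 1%N then c0 else s i.-1),
  (fun i => if i == 1%N then 0%N else (k i.-1).+1), (u ^+ 2); split.
  case=> [|[|i]] //= hi; first by rewrite uc.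
  by apply: ss; rewrite ltnS in hi.
split.
  case=> [|[|i]] //= hi; apply: sk; by rewrite /= -ltnS.
split; first by rewrite unitrX.
rewrite big_nat_recl //= expn0 expr1 eb.
set P := \prod_(1 <= i < n.+1) _.
set Q := \prod_(1 <= i < n.+1) _.
have -> : Q = P.
  by apply: eq_big_nat => i /andP[hi _]; case: i hi.
by rewrite -mulrA.
Qed.

Theorem proposition1 (R : idomainType) (hacc : ACCP R) (a : R)
  (ha0 : a != 0) (hau : a \isn't a GRing.unit) :
  (exists b c : R, sqf c /\ a = b ^+ 2 * c)
  /\
  (exists (n : nat) (s : nat -> R),
     (forall i, (i <= n)%N -> sqf (s i)) /\
     a = \prod_(i < n.+1) s i ^+ (2 ^ i))
  /\
  (exists (n : nat) (s : nat -> R) (k : nat -> nat) (c : R),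
     (1 <= n)%N /\
     (forall i, (1 <= i <= n)%N -> sqf (s i) /\ s i \isn't a GRing.unit) /\
     (forall i, (1 <= i < n)%N -> (k i < k i.+1)%N) /\
     c \is a GRing.unit /\
     a = c * \prod_(1 <= i < n.+1) s i ^+ (2 ^ k i)).
Proof.
split; first exact: (@part1 _ hacc).
split; first exact: (@part2 _ hacc).
have [n [s [k [c [h1 [h2 [h3 h4]]]]]]] := @part3 _ hacc _ ha0.
exists n, s, k, c; split => //.
case: n h1 h2 h4 => // _ _ e; move: hau; rewrite e big_geq // mulr1 h3 //.
Qed.
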